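(* Let $c,\rho\in(0,1)$ with $c+\rho>1$. Suppose the conditional gradient algorithm chooses $\theta_k\in[0,1]$ with $\rho\hat\theta_k\le\theta_k\le\hat\theta_k$, where $\hat\theta_k=\max\{\theta\in[0,1]:(1-\theta)\mathrm{gap}(x_k,g_k)+\mathcal D(x_k,s_k,\theta)\le(1-c\theta)\mathrm{gap}(x_k,g_k)\}$. Suppose $q>1$, $r\in[0,1]$ are such that $(\mathcal D,\mathrm{gap},\mathrm{subopt})$ satisfies the $(q,r)$ weak growth property with some finite $M>0$. Then for $k=0,1,\dots$ \[ \mathrm{subopt}_{k+1}\le\mathrm{subopt}_k\Big(1-(c+\rho-1)\min\Big\{1,\Big(\tfrac{q(1-c)}{M}\mathrm{subopt}_k^{1-r}\Big)^{\frac1{q-1}}\Big\}\Big). \] If $r=1$ then $\mathrm{subopt}_k\le\mathrm{subopt}_0\big(1-(c+\rho-1)\min\{1,(q(1-c)/M)^{1/(q-1)}\}\big)^k$. If $r\in[0,1)$ then $\mathrm{subopt}_k\le\mathrm{subopt}_0(1-(c+\rho-1))^k$ for $k=0,\dots,k_0$, where $k_0$ is the smallest $k$ with $\mathrm{subopt}_k^{1-r}\le\frac{M}{q(1-c)}$, and for $k\ge k_0$ \[ \mathrm{subopt}_k\le\Big(\mathrm{subopt}_{k_0}^{\frac{r-1}{q-1}}+\frac{(1-r)(c+\rho-1)}{q-1}\Big(\frac{q(1-c)}{M}\Big)^{\frac1{q-1}}(k-k_0)\Big)^{\frac{q-1}{r-1}}. \]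
   Context: Let $f,\Psi:\mathbb{R}^n\to\mathbb{R}\cup\{\infty\}$ be closed proper convex functions such that (A1) $f$ is differentiable on $\mathrm{dom}(\Psi)$, and (A2) for every $x\in\mathrm{dom}(f)$ the set $\arg\min_s\{\langle\nabla f(x),s\rangle+\Psi(s)\}$ is nonempty. $f^*,\Psi^*$ denote convex conjugates; $\arg\min_y\{\langle g,y\rangle+\Psi(y)\}=\partial\Psi^*(-g)$. $D_f(y,x)=f(y)-f(x)-\langle\nabla f(x),y-x\rangle$. $\mathrm{gap}(x,u)=f(x)+\Psi(x)+f^*(u)+\Psi^*(-u)$. $\mathcal{D}(x,s,\theta)=D_f(x+\theta(s-x),x)+\Psi(x+\theta(s-x))-(1-\theta)\Psi(x)-\theta\Psi(s)$. Suboptimality gap: $\mathrm{subopt}(x)=f(x)+\Psi(x)-\min_y\{f(y)+\Psi(y)\}$ for $x\in\mathrm{dom}(\Psi)$ (the minimum assumed attained/finite). Conditional gradient algorithm: given $x_0\in\mathrm{dom}(\Psi)$, for $k=0,1,2,\dots$ let $g_k=\nabla f(x_k)$, pick $s_k\in\arg\min_y\{\langle g_k,y\rangle+\Psi(y)\}$ and $\theta_k\in[0,1]$, and set $x_{k+1}=(1-\theta_k)x_k+\theta_k s_k$. $\mathrm{subopt}_k=\mathrm{subopt}(x_k)$. $(q,r)$ weak growth property ($q>1$, $r\in[0,1]$): there is a finite $M>0$ such that for all $x\in\mathrm{dom}(\Psi)$, $g=\nabla f(x)$, $s\in\partial\Psi^*(-g)$: $\mathcal D(x,s,\theta)\,\mathrm{subopt}(x)^{1-r}\le\frac{M\theta^q}{q}\mathrm{gap}(x,g)$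 for all $\theta\in[0,1]$. *)

(* Defs.v *)
From HB Require Import structures.
From mathcomp Require Import all_boot all_order all_algebra.
From mathcomp Require Import all_classical all_reals.
From mathcomp Require Import ereal topology normedtype derive sequences exp.
Set Implicit Arguments. Unset Strict Implicit. Unset Printing Implicit Defensive.
Import Order.TTheory GRing.Theory Num.Theory.
Import numFieldNormedType.Exports.
Local Open Scope classical_set_scope.
Local Open Scope ring_scope.

Section Defs.
Variables (R : realType) (n : nat).
Notation V := 'rV[R]_n.

Definition dot (u v : V) : R := \sum_(i < n) u ord0 i * v ord0 i.

Definition dom (h : V -> \bar R) : set V := [set x | (h x < +oo)%E].

Definition proper_fun (h : V -> \bar R) : Prop :=
  (forall x, h x != -oo%E) /\ (exists x, h x \is a fin_num).

(* convexity of an extended-valued function (convention 0 * (+oo) = 0) *)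
Definition convex_fun (h : V -> \bar R) : Prop :=
  forall (x y : V) (t : R), 0 <= t <= 1 ->
    (h (t *: x + (1 - t) *: y)%R <= t%:E * h x + (1 - t)%R%:E * h y)%E.

(* closed = lower semicontinuous = all sublevel sets closed *)
Definition closed_fun (h : V -> \bar R) : Prop :=
  forall a : R, closed [set x | (h x <= a%:E)%E].

Definition closed_proper_convex (h : V -> \bar R) : Prop :=
  [/\ closed_fun h, proper_fun h & convex_fun h].

Definition has_gradient (h : V -> \bar R) (x g : V) : Prop :=
  [/\ \forall y \near x, h y \is a fin_num,
      differentiable (fine \o h) x
    & forall v : V, 'd (fine \o h) x v = dot g v].

Definition conjugate (h : V -> \bar R) (u : V) : \bar R :=
  ereal_sup (range (fun x : V => ((dot u x)%:E - h x)%E)).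

Definition subdiff (h : V -> \bar R) (u : V) : set V :=
  [set s | h u \is a fin_num /\
           forall v : V, (h u + (dot s (v - u)%R)%:E <= h v)%E].

Definition argmin_lin (Psi : V -> \bar R) (g : V) : set V :=
  [set s | forall y : V, ((dot g s)%:E + Psi s <= (dot g y)%:E + Psi y)%E].

Definition bregman (gradf : V -> V) (f : V -> \bar R) (y x : V) : \bar R :=
  (f y - f x - (dot (gradf x) (y - x)%R)%:E)%E.

Definition gap (f Psi : V -> \bar R) (x u : V) : \bar R :=
  (f x + Psi x + conjugate f u + conjugate Psi (- u)%R)%E.

Definition Dcal (gradf : V -> V) (f Psi : V -> \bar R) (x s : V) (t : R) : \bar R :=
  (bregman gradf f (x + t *: (s - x))%R x + Psi (x + t *: (s - x))%R
     - (1 - t)%R%:E * Psi x - t%:E * Psi s)%E.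

(* subopt(x) = f(x) + Psi(x) - min_y (f(y) + Psi(y)), as a real number
   (finite for x in dom Psi when the minimum is attained and finite) *)
Definition subopt (f Psi : V -> \bar R) (x : V) : R :=
  fine (f x + Psi x - ereal_inf (range (fun y => f y + Psi y)))%E.

Definition theta_hat (gradf : V -> V) (f Psi : V -> \bar R) (c : R) (x s : V) : R :=
  sup [set t : R | 0 <= t <= 1 /\
        ((1 - t)%R%:E * gap f Psi x (gradf x) + Dcal gradf f Psi x s t
           <= (1 - c * t)%R%:E * gap f Psi x (gradf x))%E].

Definition weak_growth (gradf : V -> V) (f Psi : V -> \bar R) (q r M : R) : Prop :=
  forall x : V, dom Psi x ->
  forall s : V, subdiff (conjugate Psi) (- gradf x)%R s ->
  forall t : R, 0 <= t <= 1 ->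
    (Dcal gradf f Psi x s t * (subopt f Psi x `^ (1 - r))%R%:E
       <= (M * t `^ q / q)%R%:E * gap f Psi x (gradf x))%E.

End Defs.

(* Main.v *)
Require Import Defs.
From HB Require Import structures.
From mathcomp Require Import all_boot all_order all_algebra.
From mathcomp Require Import all_classical all_reals.
From mathcomp Require Import ereal topology normedtype derive sequences exp.
From mathcomp Require Import ring lra.
Import Order.TTheory GRing.Theory Num.Theory.
Import numFieldNormedType.Exports.
Local Open Scope classical_set_scope.
Local Open Scope ring_scope.
Set Implicit Arguments. Unset Strict Implicit.

Section RealStep.
Variables (R : realType) (c rho q r M : R).
Hypotheses (hc : 0 < c < 1) (hrho : 0 < rho < 1) (hcrho : 1 < c + rho)
  (hq : 1 < q) (hr : 0 <= r <= 1) (hM : 0 < M).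

Lemma real_step (a G th a' : R) (phi : R -> R) :
  0 <= a -> a <= G ->
  a' = a - th * G + phi th ->
  phi 0 = 0 ->
  (forall t l, 0 <= t <= 1 -> 0 <= l <= 1 -> phi (l * t) <= l * phi t) ->
  (forall t, 0 <= t <= 1 -> phi t * a `^ (1 - r) <= M * t `^ q / q * G) ->
  (forall T', 0 < T' <= 1 -> (forall t, 0 <= t < T' -> phi t <= (1 - c) * t * G) ->
      phi T' <= (1 - c) * T' * G) ->
  rho * sup [set t | 0 <= t <= 1 /\ phi t <= (1 - c) * t * G] <= th
     <= sup [set t | 0 <= t <= 1 /\ phi t <= (1 - c) * t * G] ->
  a' <= a * (1 - (c + rho - 1) *
       Num.min 1 ((q * (1 - c) / M * a `^ (1 - r)) `^ (1 / (q - 1)))).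
Proof.
move=> ha haG -> hphi0 hconv hgr hclos.
set E := [set t | _].
set T := sup E.
move=> /andP[hthl hthr].
have hG : 0 <= G by apply: le_trans haG.
have E0 : E 0 by split; [rewrite lexx ler01 | rewrite hphi0 mulr0 mul0r lexx].
have hub : has_ubound E by exists 1 => t [/andP[_ ?] _].
have T0 : 0 <= T by apply: ub_le_sup.
have T1 : T <= 1 by apply: ge_sup; [exists 0 | move=> t [/andP[_ ?] _]].
have hsup : has_sup E by split; [exists 0|].
have HT : phi T <= (1 - c) * T * G.
  have [->|Tn0] := eqVneq T 0; first by rewrite hphi0 mulr0 mul0r.
  have Tp : 0 < T by rewrite lt_neqAle eq_sym Tn0.
  apply: hclos; first by rewrite Tp.
  move=> t /andP[t0 tT].
  have eps : 0 < T - t by rewrite subr_gt0.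
  have [e Ee lte] := sup_adherent eps hsup.
  rewrite opprB addrC subrK in lte.
  case: Ee => /andP[e0 e1] he.
  have ep : 0 < e by apply: le_lt_trans lte.
  have -> : t = (t / e) * e by rewrite mulfVK // gt_eqF.
  have hl : 0 <= t / e <= 1 by rewrite divr_ge0 //= ler_pdivrMr // mul1r ltW.
  apply: le_trans (hconv e _ _ hl) _; first by rewrite e0.
  apply: le_trans (ler_wpM2l (proj1 (andP hl)) he) _.
  by rewrite !mulrA [_ / e * _]mulrC !mulrA.
have th0 : 0 <= th by apply: le_trans hthl; rewrite mulr_ge0 // ltW //; case/andP: hrho.
have Hth : phi th <= (1 - c) * th * G.
  have [T0e|Tn0] := eqVneq T 0.
    have -> : th = 0 by apply/eqP; rewrite eq_le th0 andbT -T0e.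
    by rewrite hphi0 mulr0 mul0r.
  have Tp : 0 < T by rewrite lt_neqAle eq_sym Tn0.
  have -> : th = (th / T) * T by rewrite mulfVK // gt_eqF.
  have hl : 0 <= th / T <= 1 by rewrite divr_ge0 //= ler_pdivrMr // mul1r.
  apply: le_trans (hconv T _ _ hl) _; first by rewrite T0.
  apply: le_trans (ler_wpM2l (proj1 (andP hl)) HT) _.
  by rewrite !mulrA [_ / T * _]mulrC !mulrA.
set A := a `^ (1 - r).
set m := Num.min _ _.
have m0 : 0 <= m by rewrite le_min ler01 powR_ge0.
have m1 : m <= 1 by rewrite ge_min lexx.
have mT : m <= T.
  have [A0|An0] := eqVneq A 0.
    rewrite /m A0 mulr0 powR0; last by rewrite div1r invr_eq0 subr_eq0 gt_eqF.
    by rewrite ge_min T0 orbT.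
  have Ap : 0 < A by rewrite lt_neqAle eq_sym An0 powR_ge0.
  have [m0e|mn0] := eqVneq m 0; first by rewrite m0e.
  have mp : 0 < m by rewrite lt_neqAle eq_sym mn0.
  apply: ub_le_sup => //; split; first by rewrite m0.
  have hq1 : 0 < q - 1 by rewrite subr_gt0.
  have mq : m `^ (q - 1) <= q * (1 - c) / M * A.
    have hw : m <= (q * (1 - c) / M * A) `^ (1 / (q - 1)) by rewrite ge_min lexx orbT.
    apply: le_trans (ge0_ler_powR (ltW hq1) _ _ hw) _; rewrite ?nnegrE ?powR_ge0 //.
    have X0 : 0 <= q * (1 - c) / M * A.
      case/andP: hc => _ c1; rewrite !mulr_ge0 ?invr_ge0 ?subr_ge0 ?ltW //.
      by apply: lt_trans hq.
    by rewrite -powRrM mul1r mulVf ?gt_eqF // powRr1.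
  have gm := hgr m (ltac:(by rewrite m0 m1)).
  rewrite -/m in gm.
  have mqe : m `^ q = m `^ (q - 1) * m.
    rewrite -[in LHS](subrK 1 q) (@powRD _ m (q - 1) 1); last by apply/implyP => _; rewrite gt_eqF.
    by rewrite powRr1 // ltW.
  rewrite mqe in gm.
  rewrite -(ler_pM2r Ap).
  move: gm; have qp : 0 < q by apply: lt_trans hq.
  have : M * (m `^ (q - 1) * m) / q * G <= M * (q * (1 - c) / M * A * m) / q * G.
    apply: ler_wpM2r => //; apply: ler_wpM2r; first by rewrite invr_ge0 ltW.
    apply: ler_wpM2l; first exact: ltW.
    by apply: ler_wpM2r => //; apply: ltW.
  have E1 : M * (q * (1 - c) / M * A * m) / q * G = (1 - c) * m * G * A.
    by field; apply/andP; split; rewrite gt_eqF.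
  by rewrite E1 => h1 h2; apply: le_trans h2 h1.
case/andP: hc => c0 c1; case/andP: hrho => r0 r1.
have h1 : c * (rho * T) * G <= c * th * G.
  by apply: ler_wpM2r => //; apply: ler_wpM2l => //; apply: ltW.
have h2 : c * rho * m * a <= c * (rho * T) * G.
  rewrite mulrA; apply: ler_pM => //; first by rewrite !mulr_ge0 // ltW.
  by apply: ler_wpM2l => //; rewrite mulr_ge0 // ltW.
have h3 : (c + rho - 1) * m * a <= c * rho * m * a.
  apply: ler_wpM2r => //; apply: ler_wpM2r => //; nra.
nra.
Qed.
End RealStep.

Section Seq.
Variable R : realType.

Lemma bern (u p : R) : 0 <= u < 1 -> 0 < p -> 1 + p * u <= (1 - u) `^ (- p).
Proof.
move=> /andP[u0 u1] p0.
have hu : 0 < 1 - u by rewrite subr_gt0.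
rewrite /powR gt_eqF //.
apply: le_trans (expR_ge1Dx (p * u)) _; rewrite ler_expR.
have : ln (1 + - u) <= - u by apply: le_ln1Dx; rewrite ltrN2.
rewrite -/(1 - u) => hl.
rewrite mulNr -mulrN; apply: ler_wpM2l; [exact: ltW | by rewrite lerNr].
Qed.

Lemma inv_step (a a' u p : R) : 0 < a' -> a' <= a * (1 - u) -> 0 <= u < 1 -> 0 < p ->
  a `^ (- p) * (1 + p * u) <= a' `^ (- p).
Proof.
move=> a'0 ha u01 p0; have /andP[u0 u1] := u01.
have hu : 0 < 1 - u by rewrite subr_gt0.
have a0 : 0 < a.
  by have := lt_le_trans a'0 ha; rewrite pmulr_lgt0.
have hb : 1 + p * u <= (1 - u) `^ (- p) by apply: bern.
have h1 : a `^ (- p) * (1 + p * u) <= a `^ (- p) * (1 - u) `^ (- p).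
  by apply: ler_wpM2l => //; apply: powR_ge0.
apply: le_trans h1 _.
rewrite !powRN -invfM.
have hp : a' `^ p <= (a * (1 - u)) `^ p.
  have h0 : 0 <= a * (1 - u) by apply: mulr_ge0; apply: ltW.
  by apply: (ge0_ler_powR (ltW p0)); rewrite ?nnegrE ?(ltW a'0).
rewrite (powRM _ (ltW a0) (ltW hu)) in hp.
have P1 : 0 < a `^ p * (1 - u) `^ p by apply: mulr_gt0; apply: powR_gt0.
have P2 : 0 < a' `^ p by apply: powR_gt0.
by rewrite lef_pV2.
Qed.

Variables (c rho q r M : R).
Hypotheses (hc : 0 < c < 1) (hrho : 0 < rho < 1) (hcrho : 1 < c + rho)
  (hq : 1 < q) (hr : 0 <= r <= 1) (hM : 0 < M).

Lemma seq_main (a : nat -> R) (ha0 : forall k, 0 <= a k)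
  (hstep : forall k, a k.+1 <= a k *
       (1 - (c + rho - 1) *
          Num.min 1 ((q * (1 - c) / M * a k `^ (1 - r)) `^ (1 / (q - 1))))) :
  (r = 1 -> forall k : nat,
     a k <= a 0%N *
       (1 - (c + rho - 1) * Num.min 1 ((q * (1 - c) / M) `^ (1 / (q - 1)))) ^+ k)
  /\
  (r < 1 -> forall k0 : nat,
     a k0 `^ (1 - r) <= M / (q * (1 - c)) ->
     (forall k : nat, (k < k0)%N -> ~ (a k `^ (1 - r) <= M / (q * (1 - c)))) ->
     (forall k : nat, (k <= k0)%N ->
        a k <= a 0%N * (1 - (c + rho - 1)) ^+ k)
     /\
     (forall k : nat, (k0 <= k)%N ->
        a k <=
          (a k0 `^ ((r - 1) / (q - 1))
           + (1 - r) * (c + rho - 1) / (q - 1) * (q * (1 - c) / M) `^ (1 / (q - 1))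
             * (k - k0)%:R) `^ ((q - 1) / (r - 1)))).
Proof.
case/andP: hc => c0 c1; case/andP: hrho => r0 r1; case/andP: hr => rr0 rr1.
set b := c + rho - 1.
have b0 : 0 < b by rewrite /b subr_gt0.
have b1 : b < 1 by rewrite /b; lra.
set C := q * (1 - c) / M.
have qp : 0 < q by apply: lt_trans hq.
have C0 : 0 < C by rewrite /C !mulr_gt0 ?invr_gt0 ?subr_gt0.
set e := 1 / (q - 1).
have e0 : 0 < e by rewrite /e divr_gt0 ?subr_gt0.
have fac : forall z, 0 <= Num.min 1 z -> 0 <= 1 - b * Num.min 1 z <= 1.
  move=> z hz; have hz1 : Num.min 1 z <= 1 by rewrite ge_min lexx.
  apply/andP; split; last by rewrite lerBlDr lerDl mulr_ge0 // ltW.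
  rewrite subr_ge0; apply: le_trans (_ : b * 1 <= 1); last by rewrite mulr1 ltW.
  by apply: ler_wpM2l => //; apply: ltW.
have mn0 : forall z, 0 <= Num.min 1 ((C * z) `^ e) by move=> z; rewrite le_min ler01 powR_ge0.
have dec : forall k, a k.+1 <= a k.
  move=> k; apply: le_trans (hstep k) _.
  by rewrite ler_piMr // (andP (fac _ (mn0 _))).2.
split.
  move=> r1e; have Ce : forall k, C * a k `^ (1 - r) = C by move=> k; rewrite r1e subrr powRr0 mulr1.
  elim=> [|k IH]; first by rewrite expr0 mulr1.
  apply: le_trans (hstep k) _; rewrite Ce -/b -/e exprS mulrCA [a k * _]mulrC.
  by apply: ler_wpM2l => //; case/andP: (fac _ (mn0 1)); rewrite mulr1.
move=> rlt k0 hk0 hbef.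
have p0 : 0 < (1 - r) / (q - 1) by rewrite divr_gt0 ?subr_gt0.
set p := (1 - r) / (q - 1).
split.
  elim=> [|k IH] hk; first by rewrite expr0 mulr1.
  have kk0 : (k < k0)%N by [].
  have hn := hbef k kk0.
  have hC : 1 <= C * a k `^ (1 - r).
    rewrite /C -ler_pdivrMl // invf_div; apply: ltW; rewrite ltNge; apply/negP.
    by rewrite mulr1.
  have hm : Num.min 1 ((C * a k `^ (1 - r)) `^ e) = 1.
    apply/min_idPl; rewrite -{1}(powRr0 (C * a k `^ (1 - r))).
    by apply: ler_powR => //; apply: ltW.
  apply: le_trans (hstep k) _; rewrite -/b -/C -/e hm mulr1 exprS mulrCA [a k * _]mulrC.
  by apply: ler_wpM2l; [rewrite subr_ge0 ltW | apply: IH; apply: ltnW].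
have decn : forall j i, (i <= j)%N -> a j <= a i.
  elim=> [|j IH] i; first by rewrite leqn0 => /eqP ->.
  rewrite leq_eqVlt => /orP[/eqP -> //|]; rewrite ltnS => hij.
  by apply: le_trans (dec j) (IH _ hij).
have Ck : forall k, (k0 <= k)%N -> C * a k `^ (1 - r) <= 1.
  move=> k hk.
  have : a k `^ (1 - r) <= M / (q * (1 - c)).
    apply: le_trans hk0; apply: ge0_ler_powR; rewrite ?nnegrE ?subr_ge0 //.
    exact: decn.
  rewrite -(ler_pM2l C0) => /le_trans; apply.
  rewrite /C le_eqVlt; apply/orP; left; apply/eqP; field.
  by rewrite !gt_eqF // subr_gt0.
set g := b * C `^ e.
have g0 : 0 < g by rewrite mulr_gt0 // powR_gt0.
have hpe : (1 - r) * e = p by rewrite /e /p mul1r.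
have stepk : forall k, (k0 <= k)%N -> a k.+1 <= a k * (1 - g * a k `^ p) /\ g * a k `^ p <= b.
  move=> k hk.
  have h1 := Ck k hk.
  have hmin : (C * a k `^ (1 - r)) `^ e <= 1.
    apply: (@le_trans _ _ (1 `^ e)); last by rewrite powR1.
    apply: (ge0_ler_powR (ltW e0)); rewrite ?nnegrE ?ler01 //.
    by rewrite mulr_ge0 ?powR_ge0 // ltW.
  have heq : (C * a k `^ (1 - r)) `^ e = C `^ e * a k `^ p.
    rewrite powRM. all: try (by rewrite ?powR_ge0 // ltW). by rewrite -powRrM hpe.
  have hm : Num.min 1 ((C * a k `^ (1 - r)) `^ e) = C `^ e * a k `^ p.
    by rewrite -heq; apply/min_idPr.
  split; first by have := hstep k; rewrite -/b -/C -/e hm /g mulrA.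
  by rewrite /g -mulrA -heq ler_piMr // ltW.
move=> k hk.
have [a00|a0n] := eqVneq (a k0) 0.
  have -> : a k = 0.
    by apply/eqP; rewrite eq_le ha0 andbT -a00; apply: decn.
  exact: powR_ge0.
have a0p : 0 < a k0 by rewrite lt_neqAle eq_sym a0n ha0.
have claim : forall j, a (k0 + j)%N = 0 \/
    (0 < a (k0 + j)%N /\ a k0 `^ (- p) + p * g * j%:R <= a (k0 + j)%N `^ (- p)).
  elim=> [|j IH]; first by right; rewrite addn0 mulr0 addr0 lexx.
  have [->|an] := eqVneq (a (k0 + j.+1)%N) 0; first by left.
  right.
  have ap : 0 < a (k0 + j.+1)%N by rewrite lt_neqAle eq_sym an ha0.
  split => //.
  have aj : 0 < a (k0 + j)%N.
    by apply: lt_le_trans ap _; rewrite addnS; apply: dec.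
  case: IH => [aj0|[_ IH]]; first by move: aj; rewrite aj0 ltxx.
  have [st ub] := stepk (k0 + j)%N (leq_addr _ _).
  have u01 : 0 <= g * a (k0 + j)%N `^ p < 1.
    by rewrite mulr_ge0 ?powR_ge0 ?ltW //=; apply: le_lt_trans ub _.
  have : a (k0 + j)%N `^ (- p) * (1 + p * (g * a (k0 + j)%N `^ p)) <= a (k0 + j.+1)%N `^ (- p).
    by apply: inv_step => //; rewrite addnS.
  have apj : a (k0 + j)%N `^ p != 0 by rewrite gt_eqF // powR_gt0.
  have -> : a (k0 + j)%N `^ (- p) * (1 + p * (g * a (k0 + j)%N `^ p)) =
            a (k0 + j)%N `^ (- p) + p * g by rewrite powRN; field.
  move=> h; apply: le_trans h.
  by rewrite -[j.+1]addn1 natrD mulrDr mulr1 addrA lerD2r.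
have E1 : (r - 1) / (q - 1) = - p by rewrite /p -mulNr opprB.
have E2 : (1 - r) * b / (q - 1) * C `^ e = p * g by rewrite /p /g; ring.
have rn1 : r - 1 != 0 by rewrite subr_eq0 lt_eqF.
have E3 : (q - 1) / (r - 1) = - p^-1.
  rewrite /p invf_div; field; apply/andP; split => //.
  by rewrite subr_eq0 eq_sym lt_eqF.
rewrite -/b -/C -/e E1 E2 E3.
have := claim (k - k0)%N; rewrite subnKC //.
case=> [->|[akp hB]]; first exact: powR_ge0.
set B := _ + _ in hB *.
have Bp : 0 < B.
  apply: lt_le_trans (_ : 0 < a k0 `^ (- p)) _; first exact: powR_gt0.
  by rewrite /B lerDl mulr_ge0 // mulr_ge0 // ltW.
rewrite powRN.
have hpi : 0 <= p^-1 by rewrite invr_ge0 ltW.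
have : B `^ p^-1 <= (a k `^ (- p)) `^ p^-1.
  by apply: ge0_ler_powR => //; [rewrite nnegrE ltW | rewrite nnegrE powR_ge0].
rewrite -powRrM mulNr mulfV; last by rewrite gt_eqF.
rewrite powR_inv1; last exact: ltW.
move=> h.
have P1 : 0 < B `^ p^-1 by apply: powR_gt0.
have P2 : 0 < (a k)^-1 by rewrite invr_gt0.
by rewrite -[X in X <= _]invrK lef_pV2.
Qed.
End Seq.

Section Dot.
Variables (R : realType) (n : nat).
Implicit Types u v w : 'rV[R]_n.

Lemma dotC u v : dot u v = dot v u.
Proof. by apply: eq_bigr => i _; rewrite mulrC. Qed.

Lemma dotDr u v w : dot u (v + w) = dot u v + dot u w.
Proof. by rewrite /dot -big_split; apply: eq_bigr => i _; rewrite mxE mulrDr. Qed.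

Lemma dotZr u v (a : R) : dot u (a *: v) = a * dot u v.
Proof. by rewrite /dot mulr_sumr; apply: eq_bigr => i _; rewrite mxE mulrCA. Qed.

Lemma dotNr u v : dot u (- v) = - dot u v.
Proof. by rewrite -scaleN1r dotZr mulN1r. Qed.

Lemma dotBr u v w : dot u (v - w) = dot u v - dot u w.
Proof. by rewrite dotDr dotNr. Qed.

Lemma dotNl u v : dot (- u) v = - dot u v.
Proof. by rewrite dotC dotNr dotC. Qed.
End Dot.
Section Cvx.
Variables (R : realType) (n : nat) (h : 'rV[R]_n -> \bar R).
Hypotheses (hp : proper_fun h) (hc : convex_fun h).

Lemma cvx_fin (x y : 'rV[R]_n) (t : R) : 0 <= t <= 1 ->
  h x \is a fin_num -> h y \is a fin_num ->
  h (t *: x + (1 - t) *: y) \is a fin_num /\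
  fine (h (t *: x + (1 - t) *: y)) <= t * fine (h x) + (1 - t) * fine (h y).
Proof.
move=> ht hx hy; have H := @hc x y t ht.
rewrite -(fineK hx) -(fineK hy) -!EFinM -EFinD in H.
move: H; case E: (h _) => [r| |] //= _.
by have := (proj1 hp) (t *: x + (1 - t) *: y); rewrite E.
Qed.

Lemma proper_ltoo (y : 'rV[R]_n) : (h y < +oo)%E -> h y \is a fin_num.
Proof.
move=> hy; have := (proj1 hp) y; move: hy; case: (h y) => //.
Qed.
End Cvx.

Section Grad.
Variables (R : realType) (n : nat) (f : 'rV[R]_n -> \bar R) (x g : 'rV[R]_n).
Hypotheses (hp : proper_fun f) (hc : convex_fun f) (hg : has_gradient f x g).

Lemma fin_at_grad : f x \is a fin_num.
Proof. by case: hg => hn _ _; apply: nbhs_singleton hn. Qed.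

Lemma grad_ineq y : (f x + (dot g (y - x))%:E <= f y)%E.
Proof.
have fx := fin_at_grad.
case: hg => _ hdiff hd.
have [fy|] := boolP ((f y) \is a fin_num); last first.
  move=> nf; have : f y = +oo%E.
    by move: nf (proj1 hp y); case: (f y).
  by move=> ->; rewrite leey.
rewrite -(fineK fx) -(fineK fy) -EFinD lee_fin.
set F := fine \o f.
set v := y - x.
have hder : (fun h : R => h^-1 *: (F (h *: v + x) - F x)) @ 0^' --> dot g v.
  have := @diff_derivable _ _ _ F x v hdiff.
  rewrite /derivable => hcv.
  by rewrite -hd -deriveE.
have hr := cvg_dnbhs_at_right hder.
have le : \forall h \near 0^'+, h^-1 *: (F (h *: v + x) - F x) <= fine (f y) - fine (f x).
  apply: filterS2 (nbhs_right_gt 0) (nbhs_right_le (@ltr01 R)) => h h0 h1.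
  have e : h *: v + x = h *: y + (1 - h) *: x.
    by rewrite /v scalerBr scalerBl scale1r addrA addrAC.
  have ht : 0 <= h <= 1 by rewrite ltW.
  have [_ hle] := cvx_fin hp hc ht fy fx.
  rewrite e /F /=.
  rewrite [_ *: _]mulrC ler_pdivrMr //.
  move: hle; rewrite /F /=; nra.
have := limr_le (cvgP _ hr) le.
rewrite (cvg_lim _ hr) //.
move=> /(_ (at_right_proper_filter 0)); lra.
Qed.
End Grad.

Section Main.
Variables (R : realType) (n : nat) (f Psi : 'rV[R]_n -> \bar R)
  (gradf : 'rV[R]_n -> 'rV[R]_n).
Hypotheses (hf : closed_proper_convex f) (hPsi : closed_proper_convex Psi)
  (A1 : forall x, dom Psi x -> has_gradient f x (gradf x)).

Let fp : proper_fun f. Proof. by case: hf. Qed.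
Let fc : convex_fun f. Proof. by case: hf. Qed.
Let pp : proper_fun Psi. Proof. by case: hPsi. Qed.
Let pc : convex_fun Psi. Proof. by case: hPsi. Qed.

Local Notation fr y := (fine (f y)).
Local Notation pr y := (fine (Psi y)).

Lemma fin_f x : dom Psi x -> f x \is a fin_num.
Proof. by move=> hx; apply: fin_at_grad (A1 hx). Qed.

Lemma fin_Psi x : dom Psi x -> Psi x \is a fin_num.
Proof. by move=> hx; apply: proper_ltoo. Qed.

Lemma conj_f x : dom Psi x -> conjugate f (gradf x) = (dot (gradf x) x - fr x)%:E.
Proof.
move=> hx; have fx := fin_f hx.
apply/eqP; rewrite eq_le; apply/andP; split.
  apply: ge_ereal_sup => _ [y _ <-].
  have := grad_ineq fp fc (A1 hx) y.
  rewrite -(fineK fx); case: (f y) => [r| |] //=.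
    by rewrite -EFinD -EFinB !lee_fin dotBr; lra.
  by rewrite leNye.
apply: ereal_sup_ubound; exists x => //.
by rewrite -{1}(fineK fx) -EFinB.
Qed.

Lemma fin_argmin g s : argmin_lin Psi g s -> Psi s \is a fin_num.
Proof.
move=> hs; case: pp => pn [y0 hy0].
apply: proper_ltoo => //.
have := hs y0; rewrite -(fineK hy0) -EFinD.
move: (pn s); case: (Psi s) => // r _ _; exact: ltry.
Qed.

Lemma conj_Psi_lb v s : Psi s \is a fin_num ->
  ((dot v s - pr s)%:E <= conjugate Psi v)%E.
Proof.
move=> hs; apply: ereal_sup_ubound; exists s => //.
by rewrite -{1}(fineK hs) -EFinB.
Qed.

Lemma conj_Psi g s : argmin_lin Psi g s ->
  conjugate Psi (- g) = (- dot g s - pr s)%:E.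
Proof.
move=> hs; have ps := fin_argmin hs.
apply/eqP; rewrite eq_le; apply/andP; split.
  apply: ge_ereal_sup => _ [y _ <-].
  have := hs y.
  rewrite -(fineK ps); case: (Psi y) => [r| |] //=.
    by rewrite -!EFinD !lee_fin dotNl; lra.
  by rewrite leNye.
by have := conj_Psi_lb (- g) ps; rewrite dotNl.
Qed.

Lemma gap_eq x s : dom Psi x -> argmin_lin Psi (gradf x) s ->
  gap f Psi x (gradf x) = (pr x - pr s + dot (gradf x) (x - s))%:E.
Proof.
move=> hx hs.
rewrite /gap conj_f // (conj_Psi hs) -(fineK (fin_f hx)) -(fineK (fin_Psi hx)).
rewrite -!EFinD; congr EFin; rewrite dotBr /=; ring.
Qed.

Lemma subdiff_s x s : dom Psi x -> argmin_lin Psi (gradf x) s ->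
  subdiff (conjugate Psi) (- gradf x) s.
Proof.
move=> hx hs; split; first by rewrite (conj_Psi hs).
move=> v; rewrite (conj_Psi hs) -EFinD.
apply: le_trans (conj_Psi_lb v (fin_argmin hs)).
by rewrite lee_fin opprK dotDr [dot s v]dotC [dot s (gradf x)]dotC; lra.
Qed.

Lemma seg_eq (x s : 'rV[R]_n) t : x + t *: (s - x) = t *: s + (1 - t) *: x.
Proof. by rewrite scalerBr scalerBl scale1r addrCA addrA. Qed.

Lemma fin_dom y : Psi y \is a fin_num -> dom Psi y.
Proof. by move=> hy; rewrite /dom /= -(fineK hy) ltry. Qed.

Lemma seg_fin x s t : dom Psi x -> argmin_lin Psi (gradf x) s -> 0 <= t <= 1 ->
  [/\ dom Psi (x + t *: (s - x)), Psi (x + t *: (s - x)) \is a fin_num,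
      f (x + t *: (s - x)) \is a fin_num &
      pr (x + t *: (s - x)) <= t * pr s + (1 - t) * pr x].
Proof.
move=> hx hs ht; rewrite seg_eq.
have [h1 h2] := cvx_fin pp pc ht (fin_argmin hs) (fin_Psi hx).
have hd := fin_dom h1.
by split => //; apply: fin_f.
Qed.

Lemma Dcal_eq x s t : dom Psi x -> argmin_lin Psi (gradf x) s -> 0 <= t <= 1 ->
  Dcal gradf f Psi x s t =
  (fr (x + t *: (s - x)) + pr (x + t *: (s - x)) - fr x - pr x
     + t * (pr x - pr s + dot (gradf x) (x - s)))%:E.
Proof.
move=> hx hs ht; have [_ p1 f1 _] := seg_fin hx hs ht.
have fx := fin_f hx; have px := fin_Psi hx; have ps := fin_argmin hs.
rewrite /Dcal /bregman.
rewrite -(fineK f1) -(fineK p1) -(fineK fx) -(fineK px) -(fineK ps) /=.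
rewrite -!EFinD; congr EFin.
rewrite [x + _ - x]addrC addKr dotZr !dotBr; ring.
Qed.

Lemma Fmin_eq xs : (f xs + Psi xs)%E \is a fin_num ->
  (forall y, (f xs + Psi xs <= f y + Psi y)%E) ->
  ereal_inf (range (fun y => f y + Psi y)%E) = (f xs + Psi xs)%E.
Proof.
move=> hfin hmin; apply/eqP; rewrite eq_le; apply/andP; split.
  by apply: ereal_inf_lbound; exists xs.
by apply/ereal_infP => _ [y _ <-].
Qed.

Lemma subopt_eq xs y : (f xs + Psi xs)%E \is a fin_num ->
  (forall y, (f xs + Psi xs <= f y + Psi y)%E) ->
  f y \is a fin_num -> Psi y \is a fin_num ->
  subopt f Psi y = fr y + pr y - (fr xs + pr xs).
Proof.
move=> hfin hmin fy py; rewrite /subopt (Fmin_eq hfin hmin).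
move: hfin; rewrite fin_numD => /andP[fxs pxs].
by rewrite -(fineK fy) -(fineK py) -(fineK fxs) -(fineK pxs) -!EFinD.
Qed.

Lemma a_le_G xs x s : (f xs + Psi xs)%E \is a fin_num ->
  (forall y, (f xs + Psi xs <= f y + Psi y)%E) ->
  dom Psi x -> argmin_lin Psi (gradf x) s ->
  0 <= subopt f Psi x <= pr x - pr s + dot (gradf x) (x - s).
Proof.
move=> hfin hmin hx hs.
have fx := fin_f hx; have px := fin_Psi hx; have ps := fin_argmin hs.
rewrite (subopt_eq hfin hmin fx px).
have := hmin x; have := grad_ineq fp fc (A1 hx) xs; have := hs xs.
move: hfin; rewrite fin_numD => /andP[fxs pxs].
rewrite -(fineK fx) -(fineK px) -(fineK fxs) -(fineK pxs) -(fineK ps) -!EFinD !lee_fin.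
rewrite !dotBr => h1 h2 h3; apply/andP; split; lra.
Qed.

Definition Gp x s := pr x - pr s + dot (gradf x) (x - s).
Definition phi x s t :=
  fr (x + t *: (s - x)) + pr (x + t *: (s - x)) - fr x - pr x + t * Gp x s.

Lemma phi0 x s : phi x s 0 = 0.
Proof. by rewrite /phi scale0r addr0 mul0r addr0; ring. Qed.

Lemma phi_cvx x s t l : dom Psi x -> argmin_lin Psi (gradf x) s ->
  0 <= t <= 1 -> 0 <= l <= 1 -> phi x s (l * t) <= l * phi x s t.
Proof.
move=> hx hs ht hl.
have [_ p1 f1 _] := seg_fin hx hs ht.
have fx := fin_f hx; have px := fin_Psi hx.
have e : l *: (x + t *: (s - x)) + (1 - l) *: x = x + (l * t) *: (s - x).
  by rewrite -seg_eq addrAC subrr add0r scalerA.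
have [_ h1] := cvx_fin fp fc hl f1 fx.
have [_ h2] := cvx_fin pp pc hl p1 px.
rewrite e in h1 h2.
rewrite /phi.
nra.
Qed.

Lemma phi_closed x s (c T' : R) : dom Psi x -> argmin_lin Psi (gradf x) s -> 0 < T' <= 1 ->
  (forall t, 0 <= t < T' -> phi x s t <= (1 - c) * t * Gp x s) ->
  phi x s T' <= (1 - c) * T' * Gp x s.
Proof.
move=> hx hs /andP[T0 T1] H.
set p := fun t : R => x + t *: (s - x).
set G := Gp x s.
set K := fun t : R => (fr x + pr x) + t *: (- (c * G)) - fr (p t).
have sc : forall a b : R, a *: b = a * b by [].
have hT : 0 <= T' <= 1 by rewrite ltW.
have [dT pT fT _] := seg_fin hx hs hT.
suff : pr (p T') <= K T' by rewrite /phi /K sc -/G; lra.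
apply/ler_addgt0Pr => e e0.
have pcv : p t @[t --> T'] --> p T'.
  apply: cvgD; first exact: cvg_cst.
  by apply: cvgZ; [exact: cvg_id | exact: cvg_cst].
have [_ hd _] := A1 dT.
have fpc : (fine \o f) (p t) @[t --> T'] --> fr (p T').
  exact: (cvg_comp _ _ pcv (differentiable_continuous hd)).
have Kc : K t @[t --> T'] --> K T'.
  apply: cvgB; last exact: fpc.
  apply: cvgD; first exact: cvg_cst.
  by apply: cvgZ; [exact: cvg_id | exact: cvg_cst].
have KS : \forall t \near T', K t < K T' + e.
  by apply: (cvgr_lt _ Kc); rewrite ltrDl.
have cS : closed [set y | (Psi y <= (K T' + e)%:E)%E].
  by case: hPsi => + _ _; apply.
have : [set y | (Psi y <= (K T' + e)%:E)%E] (p T').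
  rewrite ((closure_id _).1 cS) => U hU.
  have hU' : \forall t \near T', U (p t) := pcv _ hU.
  have : \forall t \near T'^'-,
      ([set y | (Psi y <= (K T' + e)%:E)%E] `&` U) (p t).
    near=> t.
    have t0 : 0 <= t by near: t; exact: nbhs_left_ge.
    have tT : t < T' by near: t; exact: nbhs_left_lt.
    have Ut : U (p t) by near: t; exact: cvg_within hU'.
    have Kt : K t < K T' + e by near: t; exact: cvg_within KS.
    split => //.
    have ht : 0 <= t <= 1 by rewrite t0 (ltW (lt_le_trans tT T1)).
    have [_ pt _ _] := seg_fin hx hs ht.
    have := H t (ltac:(by rewrite t0 tT)).
    rewrite /= -(fineK pt) lee_fin.
    move: Kt; rewrite /phi /K sc -/G; lra.
  move=> hn; have [t ht] := @filter_ex _ _ (at_left_proper_filter T') _ hn.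
  by exists (p t).
by rewrite /= /p -(fineK pT) lee_fin.
Unshelve. all: end_near.
Qed.
End Main.

Theorem theorem4 (R : realType) (n : nat)
  (f Psi : 'rV[R]_n -> \bar R) (gradf : 'rV[R]_n -> 'rV[R]_n)
  (hf : closed_proper_convex f) (hPsi : closed_proper_convex Psi)
  (A1 : forall x, dom Psi x -> has_gradient f x (gradf x))
  (A2 : forall x, dom Psi x -> argmin_lin Psi (gradf x) !=set0)
  (hmin : exists xs : 'rV[R]_n, (f xs + Psi xs)%E \is a fin_num /\
            forall y, (f xs + Psi xs <= f y + Psi y)%E)
  (c rho : R) (hc : 0 < c < 1) (hrho : 0 < rho < 1) (hcrho : 1 < c + rho)
  (x s : nat -> 'rV[R]_n) (theta : nat -> R)
  (hx0 : dom Psi (x 0%N))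
  (hs : forall k, argmin_lin Psi (gradf (x k)) (s k))
  (htheta : forall k, 0 <= theta k <= 1 /\
     rho * theta_hat gradf f Psi c (x k) (s k) <= theta k
       <= theta_hat gradf f Psi c (x k) (s k))
  (hx : forall k, x k.+1 = (1 - theta k) *: x k + theta k *: s k)
  (q r M : R) (hq : 1 < q) (hr : 0 <= r <= 1) (hM : 0 < M)
  (hwg : weak_growth gradf f Psi q r M) :
  (forall k : nat,
     subopt f Psi (x k.+1) <= subopt f Psi (x k) *
       (1 - (c + rho - 1) *
          Num.min 1 ((q * (1 - c) / M * subopt f Psi (x k) `^ (1 - r)) `^ (1 / (q - 1)))))
  /\
  (r = 1 -> forall k : nat,
     subopt f Psi (x k) <= subopt f Psi (x 0%N) *
       (1 - (c + rho - 1) * Num.min 1 ((q * (1 - c) / M) `^ (1 / (q - 1)))) ^+ k)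
  /\
  (r < 1 -> forall k0 : nat,
     subopt f Psi (x k0) `^ (1 - r) <= M / (q * (1 - c)) ->
     (forall k : nat, (k < k0)%N -> ~ (subopt f Psi (x k) `^ (1 - r) <= M / (q * (1 - c)))) ->
     (forall k : nat, (k <= k0)%N ->
        subopt f Psi (x k) <= subopt f Psi (x 0%N) * (1 - (c + rho - 1)) ^+ k)
     /\
     (forall k : nat, (k0 <= k)%N ->
        subopt f Psi (x k) <=
          (subopt f Psi (x k0) `^ ((r - 1) / (q - 1))
           + (1 - r) * (c + rho - 1) / (q - 1) * (q * (1 - c) / M) `^ (1 / (q - 1))
             * (k - k0)%:R) `^ ((q - 1) / (r - 1)))).
Proof.
have [xs [hfin hmn]] := hmin.
have hxk : forall k, x k.+1 = x k + theta k *: (s k - x k).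
  by move=> k; rewrite hx seg_eq addrC.
have hth01 : forall k, 0 <= theta k <= 1 by move=> k; case: (htheta k).
have hdom : forall k, dom Psi (x k).
  elim=> [|k IH] //; rewrite hxk.
  by have [] := seg_fin hPsi A1 IH (hs k) (hth01 k).
have hstep : forall k, subopt f Psi (x k.+1) <= subopt f Psi (x k) *
       (1 - (c + rho - 1) *
          Num.min 1 ((q * (1 - c) / M * subopt f Psi (x k) `^ (1 - r)) `^ (1 / (q - 1)))).
  move=> k.
  have hdk := hdom k; have hsk := hs k.
  have [ha0 haG] := andP (a_le_G hf hPsi A1 hfin hmn hdk hsk).
  apply: (real_step hc hrho hq hM ha0 haG (th := theta k) (phi := phi f Psi gradf (x k) (s k))).
  - have [_ p1 f1 _] := seg_fin hPsi A1 hdk hsk (hth01 k).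
    rewrite hxk (subopt_eq hfin hmn f1 p1).
    rewrite (subopt_eq hfin hmn (fin_f A1 hdk) (fin_Psi hPsi hdk)) /phi /Gp.
    set X1 := fine (f (x k + _)); set X2 := fine (Psi (x k + _)).
    set X3 := fine (f (x k)); set X4 := fine (Psi (x k)); set X5 := fine (f xs) + _.
    set X6 := dot _ _.
    ring.
  - exact: phi0.
  - by move=> t l ht hl; apply: phi_cvx.
  - move=> t ht.
    have := hwg (x k) hdk (s k) (subdiff_s hPsi hdk hsk) t ht.
    rewrite (Dcal_eq hPsi A1 hdk hsk ht) (gap_eq hf hPsi A1 hdk hsk) -!EFinM lee_fin.
    by rewrite /phi /Gp.
  - by move=> T' hT' H; apply: phi_closed.
  - have E : theta_hat gradf f Psi c (x k) (s k) =
        sup [set t | 0 <= t <= 1 /\ phi f Psi gradf (x k) (s k) t <= (1 - c) * t * Gp Psi gradf (x k) (s k)].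
      congr sup; apply/seteqP; split => t [ht H]; split => //; move: H;
        rewrite (Dcal_eq hPsi A1 hdk hsk ht) (gap_eq hf hPsi A1 hdk hsk) -!EFinM -!EFinD lee_fin;
        rewrite /phi /Gp;
        set X1 := fine (f (x k + _)); set X2 := fine (Psi (x k + _));
        set X6 := fine (Psi (x k)) - _ + _; lra.
    by rewrite -E; case: (htheta k).
split; first exact: hstep.
have ha0 : forall k, 0 <= subopt f Psi (x k).
  by move=> k; have [] := andP (a_le_G hf hPsi A1 hfin hmn (hdom k) (hs k)).
exact: (seq_main hc hrho hcrho hq hr hM ha0 hstep).
Qed.
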